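(* Let $(M,d)$ be a complete separable geodesic space and $m\in\mathcal P_2(M)$ such that (A1) and (A2) hold. Let $\beta>0$ and suppose each loss $\ell_t$ ($t\ge1$) is measurable and geodesically $\beta$-expconcave, and that the \textsc{ewb} forecaster with $\beta_t=\beta$ is well defined (normalizing integrals finite and positive, each $m_t\in\mathcal P_2(M)$). Then for all $n\ge1$, with $L_n=\sum_{t=1}^n\ell_t$, \[\sum_{t=1}^n\ell_t(x_t)\le\inf_\mu\Big\{\int_ML_n\,\mathrm d\mu+\frac{\mathcal E(\mu|m)}{\beta}\Big\},\] where the infimum runs over probability measures $\mu$ on $M$ for which $\int L_n\,\mathrm d\mu$ is well defined.
   Context: Geodesic: path $\gamma:[0,1]\to M$ with $d(\gamma(s),\gamma(t))=|t-s|d(\gamma(0),\gamma(1))$. $f$ is geodesically convex if $t\mapsto f(\gamma(t))$ is convex for every geodesic; geodesically concave if $-f$ is; geodesically $\beta$-expconcave if $e^{-\beta f}$ is geodesically concave. $\mathcal P_2(M)$: Borel probability measures with $\int d^2(x,y)\mu(\mathrm dy)<\infty$ for all $x$; barycenter: minimizer of $x\mapsto\int d^2(x,y)\mu(\mathrm dy)$. (A1): every $\mu\in\mathcal P_2(M)$ has a barycenter. (A2): for every $\mu\in\mathcal P_2(M)$, barycenter $x^*$ of $\mu$ and geodesically convex $f:M\to\mathbb R$ either positive or in $L^1(\mu)$, $f(x^* )\le\int f\mathrm d\mu$. Relative entropy: $\mathcal E(\mu|m)=\int\ln(\mathrm d\mu/\mathrm dm)\,\mathrm d\mu$ if $\mu\ll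 m$, $+\infty$ otherwise. \textsc{ewb} forecaster with parameter $\beta$: $m_1=m$, $\mathrm dm_{t+1}=e^{-\beta\ell_t}\mathrm dm_t/\int e^{-\beta\ell_t}\mathrm dm_t$, $x_t$ any barycenter of $m_t$. *)

(* Defs.v *)
From HB Require Import structures.
From mathcomp Require Import all_boot all_order all_algebra.
From mathcomp Require Import all_classical all_reals all_analysis.
Set Implicit Arguments.
Unset Strict Implicit.
Unset Printing Implicit Defensive.
Import Order.TTheory GRing.Theory Num.Theory.
Local Open Scope classical_set_scope.
Local Open Scope ring_scope.

Section Defs.
Context (R : realType) {disp : measure_display} (M : measurableType disp).
Variable dist : M -> M -> R.

Definition is_metric : Prop :=
  [/\ forall x y, dist x y = 0 <-> x = y,
      forall x y, dist x y = dist y x &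
      forall x y z, dist x z <= dist x y + dist y z].

Definition metric_complete : Prop :=
  forall u : nat -> M,
    (forall e : R, 0 < e -> exists N, forall p q, (N <= p)%N -> (N <= q)%N ->
        dist (u p) (u q) < e) ->
    exists l, forall e : R, 0 < e -> exists N, forall n, (N <= n)%N -> dist (u n) l < e.

Definition metric_separable : Prop :=
  exists D : nat -> M, forall x (e : R), 0 < e -> exists n, dist x (D n) < e.

Definition dopen (A : set M) : Prop :=
  forall x, A x -> exists2 e : R, 0 < e & forall y, dist x y < e -> A y.

Definition borel_of_dist : Prop := (@measurable _ M) = <<s dopen >>.

(* geodesic: path gamma : [0,1] -> M (values outside [0,1] irrelevant) *)
Definition is_geodesic (g : R -> M) : Prop :=
  forall s t : R, 0 <= s <= 1 -> 0 <= t <= 1 ->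
    dist (g s) (g t) = `|t - s| * dist (g 0) (g 1).

Definition geodesic_space : Prop :=
  forall x y, exists g, [/\ is_geodesic g, g 0 = x & g 1 = y].

Definition geod_convex (f : M -> R) : Prop :=
  forall g, is_geodesic g -> forall s t l : R,
    0 <= s <= 1 -> 0 <= t <= 1 -> 0 <= l <= 1 ->
    f (g ((1 - l) * s + l * t)) <= (1 - l) * f (g s) + l * f (g t).

Definition geod_concave (f : M -> R) : Prop := geod_convex (fun x => - f x).

Definition geod_expconcave (beta : R) (f : M -> R) : Prop :=
  geod_concave (fun x => expR (- (beta * f x))).

Definition in_P2 (mu : probability M R) : Prop :=
  forall x, (\int[mu]_y ((dist x y) ^+ 2)%:E < +oo)%E.

Definition barycenter (mu : probability M R) (x : M) : Prop :=
  forall z, (\int[mu]_y ((dist x y) ^+ 2)%:E <= \int[mu]_y ((dist z y) ^+ 2)%:E)%E.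

Definition A1 : Prop := forall mu, in_P2 mu -> exists x, barycenter mu x.

(* "positive" read as nonnegative; integrals only make sense for measurable f *)
Definition A2 : Prop :=
  forall (mu : probability M R) (x : M) (f : M -> R),
    in_P2 mu -> barycenter mu x -> geod_convex f ->
    ((measurable_fun setT f /\ forall y, 0 <= f y) \/
      mu.-integrable setT (EFin \o f)) ->
    ((f x)%:E <= \int[mu]_y (f y)%:E)%E.

Definition rel_entropy (mu m : probability M R) : \bar R :=
  if pselect (charge_of_finite_measure mu `<< m) then
    (\int[mu]_x (ln (fine (Radon_Nikodym (charge_of_finite_measure mu) m x)))%:E)%E
  else +oo%E.

(* the integral of f w.r.t. mu is well defined (not +oo - +oo) *)
Definition integral_well_defined (mu : probability M R) (f : M -> R) : Prop :=
  measurable_fun setT f /\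
  ((\int[mu]_x ((EFin \o f)^\+ x) < +oo)%E \/ (\int[mu]_x ((EFin \o f)^\- x) < +oo)%E).

End Defs.

(* Main.v *)
Require Import Defs.
From HB Require Import structures.
From mathcomp Require Import all_boot all_order all_algebra.
From mathcomp Require Import all_classical all_reals all_analysis.
From mathcomp Require Import measurable_realfun.
From mathcomp Require Import ring lra.
Import Order.TTheory GRing.Theory Num.Theory.
Local Open Scope classical_set_scope.
Local Open Scope ring_scope.

Module Helpers.
Import Order.TTheory GRing.Theory Num.Theory.
Import Num.Def.
Local Open Scope classical_set_scope.
Local Open Scope ring_scope.
Local Open Scope ereal_scope.

Set Implicit Arguments.
Unset Strict Implicit.
Import HBNNSimple.
Section dens.
Context d (T : measurableType d) (R : realType).
Variables (nu mu : {measure set T -> \bar R}) (h : T -> R).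
Hypotheses (h0 : forall x, (0 <= h x)%R) (mh : measurable_fun setT h)
  (H : forall A, measurable A -> nu A = \int[mu]_(x in A) (h x)%:E).

Lemma dens_change (f : T -> \bar R) (E : set T) : (forall x, 0 <= f x) ->
    measurable E -> measurable_fun E f ->
  \int[mu]_(x in E) (f x * (h x)%:E) = \int[nu]_(x in E) f x.
Proof.
move=> f0 mE mf; set g := fun x => (h x)%:E.
have mg : measurable_fun setT g by exact/measurable_EFinP.
pose hh := nnsfun_approx mE mf.
have -> : \int[nu]_(x in E) f x =
    lim (\int[nu]_(x in E) (EFin \o hh n) x @[n --> \oo]).
  have fE x : E x -> f x = lim ((EFin \o hh n) x @[n --> \oo]).
    by move=> Ex; apply/esym/cvg_lim => //; exact: cvg_nnsfun_approx.
  under eq_integral => x /[!inE] /fE -> //.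
  apply: monotone_convergence => //.
  - move=> n; apply/measurable_EFinP.
    by apply: (measurable_funS measurableT) => //; exact/measurable_funP.
  - by move=> n x Ex //=; rewrite lee_fin.
  - by move=> x Ex a b ab; rewrite lee_fin; exact/lefP/nd_nnsfun_approx.
have -> : \int[mu]_(x in E) (f x * g x) =
    lim (\int[mu]_(x in E) ((EFin \o hh n) \* g) x @[n --> \oo]).
  have fg x : E x -> f x * g x = lim (((EFin \o hh n) \* g) x @[n --> \oo]).
    by move=> Ex; apply/esym/cvg_lim => //; apply: cvgeZr;
      [by []|exact: cvg_nnsfun_approx].
  under eq_integral => x /[!inE] /fg -> //.
  apply: monotone_convergence => [//| | |].
  - move=> n; apply/emeasurable_funM; apply/measurable_funTS.
      exact/measurable_EFinP.
    exact: mg.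
  - by move=> n x Ex /=; rewrite mule_ge0 ?lee_fin.
  - by move=> x Ex a b ab/=; rewrite lee_wpmul2r ?lee_fin//; exact/lefP/nd_nnsfun_approx.
suff suf n : \int[mu]_(x in E) ((EFin \o hh n) x * g x) =
    \int[nu]_(x in E) (EFin \o hh n) x.
  by under eq_fun do rewrite suf.
transitivity (\int[nu]_(x in E)
   (\sum_(y \in range (hh n)) (y * \1_(hh n @^-1` [set y]) x)%:E)); last first.
  by apply: eq_integral => t tE; rewrite /= fimfunE -fsumEFin.
have indich m r : measurable_fun E (fun x => (r * \1_(hh m @^-1` [set r]) x)%:E).
  by apply: (measurable_comp measurableT) => //; exact: measurable_funM.
rewrite ge0_integral_fsum//; last by move=> m y Ey; exact: nnfun_muleindic_ge0.
transitivity (\int[mu]_(x in E) (\sum_(y \in range (hh n))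
    (y * \1_(hh n @^-1` [set y]) x)%:E * g x)).
  under [RHS]eq_integral => x xE.
    rewrite -ge0_mule_fsuml => [|y]; last exact: nnfun_muleindic_ge0.
    rewrite fsumEFin // -(fimfunE _ x); over.
  by [].
rewrite ge0_integral_fsum//; last 2 first.
  - move=> y; apply: emeasurable_funM => //; apply: measurable_funTS.
    exact: mg.
  - by move=> m y Ey; rewrite mule_ge0 ?lee_fin// -lee_fin nnfun_muleindic_ge0.
apply: eq_fsbigr => r rhn.
under [RHS]eq_integral do rewrite EFinM.
rewrite integralZl_indic_nnsfun => //.
under eq_integral do rewrite EFinM -muleA.
rewrite ge0_integralZl//.
- under eq_integral do rewrite muleC.
  rewrite (eq_integral (g \_ (hh n @^-1` [set r]))); last first.
    by move=> x xE; rewrite epatch_indic.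
  by rewrite -integral_mkcondr -H// integral_indic// setIC.
- apply: emeasurable_funM; first exact/measurable_EFinP.
  exact/measurable_funTS/mg.
- by move=> t Et; rewrite mule_ge0 ?lee_fin.
- by move: rhn; rewrite inE => -[t _ <-]; rewrite lee_fin.
Qed.
End dens.
Lemma final_arith (R : realType) (Up Um Lp Lm Wt : \bar R) (b cp cm lW : R) :
  (0 < b)%R -> 0 <= Up -> 0 <= Um -> Um <= 1 -> 0 <= Lp -> 0 <= Lm ->
  0 <= Wt -> Wt <= 1 -> (cp - cm = 1 - lW)%R -> (Lp < +oo \/ Lm < +oo) ->
  Um + b%:E * Lm + cp%:E <= Up + b%:E * Lp + Wt + cm%:E ->
  (- lW / b)%:E <= dual_adde (Lp - Lm) ((Up - Um) * (b^-1)%:E).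
Proof.
move=> b0 Up0 Um0 Um1 Lp0 Lm0 Wt0 Wt1 ec hLL I.
have [um eum] : exists um : R, Um = um%:E.
  by exists (fine Um); rewrite fineK// fin_numElt (lt_le_trans _ Um0) ?ltNy0// (le_lt_trans Um1) ?ltry.
have [wt ewt] : exists wt : R, Wt = wt%:E.
  by exists (fine Wt); rewrite fineK// fin_numElt (lt_le_trans _ Wt0) ?ltNy0// (le_lt_trans Wt1) ?ltry.
subst Um Wt.
case: Up Up0 I => [up| |] // Up0 I; last first.
  rewrite -EFinN /= mulyr gtr0_sg ?invr_gt0// mul1e.
  by case: (Lp - Lm) => [r| |] /=; rewrite ?leey.
case: Lp Lp0 hLL I => [lp| |] // Lp0 hLL I; last first.
  case: Lm Lm0 hLL I => [lm| |] // Lm0 hLL I.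
    by rewrite /= leey.
  by case: hLL; rewrite ltxx.
case: Lm Lm0 hLL I => [lm| |] // Lm0 hLL I; last first.
  by move: I; rewrite mulry gtr0_sg// mul1e /= leye_eq.
move: I; rewrite -!EFinM -!EFinD lee_fin => I.
  rewrite /= lee_fin.
move: Um1 Wt1; rewrite !lee_fin => Um1 Wt1.
have H : (- lW <= b*lp - b*lm + (up-um))%R by lra.
have -> : ((lp - lm) + (up - um) / b = (b*lp - b*lm + (up-um)) / b)%R.
  by field; rewrite gt_eqF.
by rewrite ler_pM2r ?invr_gt0.
Qed.
Section helpers.
Context d (T : measurableType d) (R : realType).
Implicit Types (mu : {measure set T -> \bar R}) (f g : T -> R).

Lemma iD mu f g : (forall x, 0 <= f x)%R -> (forall x, 0 <= g x)%R ->
  measurable_fun setT f -> measurable_fun setT g ->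
  \int[mu]_x (f x + g x)%:E = \int[mu]_x (f x)%:E + \int[mu]_x (g x)%:E.
Proof.
move=> f0 g0 mf mg; under eq_integral do rewrite EFinD.
by apply: ge0_integralD => //; [move=> x _; rewrite lee_fin|exact/measurable_EFinP|
  move=> x _; rewrite lee_fin|exact/measurable_EFinP].
Qed.

Lemma iZ mu (k : R) f : (0 <= k)%R -> (forall x, 0 <= f x)%R ->
  measurable_fun setT f ->
  \int[mu]_x (k * f x)%:E = k%:E * \int[mu]_x (f x)%:E.
Proof.
move=> k0 f0 mf; under eq_integral do rewrite EFinM.
apply: ge0_integralZl => //; first exact/measurable_EFinP.
by move=> x _; rewrite lee_fin.
Qed.

Lemma pn f : (EFin \o f)^\+ = (fun x => (maxr (f x) 0)%:E).
Proof. by apply/funext => x; rewrite funeposE /= EFin_max. Qed.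

Lemma nn f : (EFin \o f)^\- = (fun x => (maxr (- f x) 0)%:E).
Proof. by apply/funext => x; rewrite funenegE /= EFin_max. Qed.

Lemma iPN mu f : \int[mu]_x (f x)%:E =
  \int[mu]_x (maxr (f x) 0)%:E - \int[mu]_x (maxr (- f x) 0)%:E.
Proof. by rewrite (integralE _ _ (EFin \o f)) pn nn. Qed.

Lemma ile mu f g : (forall x, 0 <= f x)%R -> measurable_fun setT f ->
  measurable_fun setT g -> (forall x, f x <= g x)%R ->
  \int[mu]_x (f x)%:E <= \int[mu]_x (g x)%:E.
Proof.
move=> f0 mf mg fg; apply: ge0_le_integral => //; [move=> x _; rewrite lee_fin//|
  exact/measurable_EFinP|exact/measurable_EFinP|move=> x _; rewrite lee_fin//].
Qed.

Lemma icst (mu : probability T R) (c : R) : \int[mu]_x (c%:E) = c%:E.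
Proof.
rewrite -[LHS]/(\int[mu]_x (cst c%:E) x) integral_cst //.
exact: (etrans (congr1 _ (probability_setT mu)) (mule1 _)).
Qed.

Lemma ige0 mu f : (forall x, 0 <= f x)%R -> 0 <= \int[mu]_x (f x)%:E.
Proof. by move=> f0; apply: integral_ge0 => x _; rewrite lee_fin. Qed.

Lemma mmax f : measurable_fun setT f -> measurable_fun setT (fun x => maxr (f x) 0%R).
Proof. by move=> mf; apply: measurable_maxr => //; exact: measurable_cst. Qed.

Lemma posneg (x : R) : (maxr x 0 - maxr (- x) 0 = x)%R.
Proof. by rewrite /Order.max; case: ifPn => h1; case: ifPn => h2; lra. Qed.

End helpers.

Unset Implicit Arguments.
Set Strict Implicit.
Local Open Scope ring_scope.
Lemma pw_w (R : realType) (a W v : R) : 0 <= a -> 0 < W ->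
  a * maxr (1 - ln W - ln a - v) 0 <= expR (- v) / W.
Proof.
move=> a0 W0.
have q0 : 0 <= expR (- v) / W by rewrite divr_ge0 ?expR_ge0 ?ltW.
have [->|ap] := eqVneq a 0; first by rewrite mul0r.
have apos : 0 < a by rewrite lt_neqAle eq_sym ap a0.
have e : a * expR (- ln W - ln a - v) = expR (- v) / W.
  have -> : - ln W - ln a - v = - v + (- ln W + - ln a) by lra.
  rewrite !expRD !expRN !lnK ?posrE //.
  by rewrite mulrCA; congr (_ * _); rewrite mulrCA mulfV ?gt_eqF // mulr1.
have h := expR_ge1Dx (- ln W - ln a - v).
rewrite /Order.max; case: ifPn => h1.
  by rewrite mulr0.
rewrite -e ler_pM2l //; lra.
Qed.

Lemma pw_u (R : realType) (a : R) : 0 <= a -> a * maxr (- ln a) 0 <= 1.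
Proof.
move=> a0.
have [->|ap] := eqVneq a 0; first by rewrite mul0r.
have apos : 0 < a by rewrite lt_neqAle eq_sym ap a0.
have h := expR_ge1Dx (- ln a).
rewrite expRN lnK ?posrE // in h.
have h2 : a * (1 - ln a) <= a * a^-1 by rewrite ler_pM2l.
rewrite mulfV ?gt_eqF // mulrBr mulr1 in h2.
rewrite /Order.max; case: ifPn => h1.
  by rewrite mulr0.
rewrite mulrN; lra.
Qed.

Section gibbs.
Context d (T : measurableType d) (R : realType).
Local Open Scope ereal_scope.

Lemma gibbs_core (m mu : probability T R) (a L : T -> R) (beta W : R) :
  (0 < beta)%R -> (0 < W)%R -> (forall x, 0 <= a x)%R -> measurable_fun setT a ->
  (forall A, measurable A -> mu A = \int[m]_(x in A) (a x)%:E) ->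
  measurable_fun setT L ->
  \int[m]_x (expR (- (beta * L x)) / W)%:E <= 1 ->
  (\int[mu]_x ((EFin \o L)^\+ x) < +oo \/ \int[mu]_x ((EFin \o L)^\- x) < +oo) ->
  (- ln W / beta)%:E <=
    dual_adde (\int[mu]_x (L x)%:E) (\int[mu]_x (ln (a x))%:E * (beta^-1)%:E).
Proof.
move=> b0 W0 a0 ma Hmu mL Hq HL.
set c := (1 - ln W)%R.
pose q x := (expR (- (beta * L x)) / W)%R.
pose u x := ln (a x).
pose w x := maxr (c - u x - beta * L x)%R 0%R.
have mu_ : measurable_fun setT u := measurableT_comp (@measurable_ln R) ma.
have mbL : measurable_fun setT (fun x => beta * L x)%R.
  by apply: measurable_funM => //; exact: measurable_cst.
have mq : measurable_fun setT q.
  rewrite /q; apply: (@measurable_funM _ _ _ _ (fun x => expR (- (beta * L x))%R) (cst W^-1%R)); last exact: measurable_cst.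
  apply: measurableT_comp; first exact: measurable_expR.
  exact: measurable_funN.
have mw : measurable_fun setT w.
  rewrite /w; apply: mmax; apply: measurable_funB => //.
  by apply: measurable_funB => //; exact: measurable_cst.
have w0 x : (0 <= w x)%R by rewrite /w /Order.max; case: ifPn => h; lra.
have wge x : (c - u x - beta * L x <= w x)%R by rewrite /w /Order.max; case: ifPn => h; lra.
have dens (f : T -> \bar R) : (forall x, 0 <= f x) -> measurable_fun setT f ->
    \int[mu]_x f x = \int[m]_x (f x * (a x)%:E).
  move=> f0 mf; apply: esym.
  exact: (@dens_change _ _ _ mu m a a0 ma Hmu f setT f0 measurableT mf).
have mm (f : T -> R) : measurable_fun setT f -> measurable_fun setT (fun x => maxr (f x) 0%R) := @mmax _ _ _ f.
have mN (f : T -> R) : measurable_fun setT f -> measurable_fun setT (fun x => - f x)%R := @measurable_funN _ _ _ _ f.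
have m0 (r : R) : (0 <= maxr r 0)%R by rewrite /Order.max; case: ifPn => h; lra.
have hUm : \int[mu]_x (maxr (- u x) 0)%:E <= 1.
  rewrite dens; last 2 first.
  - by move=> x; rewrite lee_fin m0.
  - by apply/measurable_EFinP; apply: mm; exact: mN.
  under eq_integral do rewrite -EFinM.
  apply: (@le_trans _ _ (\int[m]_x (1%R)%:E)); last by rewrite icst.
  apply: ile.
  - by move=> x; rewrite mulr_ge0 ?m0.
  - by apply: measurable_funM => //; apply: mm; exact: mN.
  - exact: measurable_cst.
  - by move=> x; rewrite mulrC; apply: pw_u.
have hWt : \int[mu]_x (w x)%:E <= 1.
  rewrite dens; last 2 first.
  - by move=> x; rewrite lee_fin.
  - exact/measurable_EFinP.
  under eq_integral do rewrite -EFinM.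
  apply: le_trans Hq; apply: ile.
  - by move=> x; rewrite mulr_ge0.
  - exact: measurable_funM.
  - exact: mq.
  - by move=> x; rewrite mulrC; apply: pw_w.
have mp (f : T -> R) : measurable_fun setT f -> measurable_fun setT (fun x => maxr (- f x)%R 0%R).
  by move=> mf; apply: mm; exact: mN.
have I : \int[mu]_x ((maxr (- u x) 0 + beta * maxr (- L x) 0 + maxr c 0)%R)%:E <=
         \int[mu]_x ((maxr (u x) 0 + beta * maxr (L x) 0 + w x + maxr (- c) 0)%R)%:E.
  apply: ile.
  - by move=> x; rewrite !addr_ge0 ?mulr_ge0 ?m0 ?ltW.
  - apply: measurable_funD; last exact: measurable_cst.
    apply: measurable_funD; first exact: mp.
    by apply: measurable_funM; [exact: measurable_cst|exact: mp].
  - apply: measurable_funD; last exact: measurable_cst.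
    apply: measurable_funD => //.
    apply: measurable_funD; first exact: mm.
    by apply: measurable_funM; [exact: measurable_cst|exact: mm].
  - move=> x; have := posneg (u x); have := posneg (L x); have := posneg c.
    have := wge x.
    have e : (beta * maxr (L x) 0 - beta * maxr (- L x) 0 = beta * L x)%R.
      by rewrite -mulrBr posneg.
    lra.
rewrite (@iD _ _ _ mu (fun x => maxr (- u x) 0 + beta * maxr (- L x) 0)%R (fun=> maxr c 0%R)) in I; last 4 first.
- by move=> x; rewrite !addr_ge0 ?mulr_ge0 ?m0 ?ltW.
- by move=> x; rewrite m0.
- apply: measurable_funD; first exact: mp.
  by apply: measurable_funM; [exact: measurable_cst|exact: mp].
- exact: measurable_cst.
rewrite (@iD _ _ _ mu (fun x => maxr (- u x) 0)%R (fun x => beta * maxr (- L x) 0)%R) in I; last 4 first.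
- by move=> x; rewrite m0.
- by move=> x; rewrite mulr_ge0 ?m0 ?ltW.
- exact: mp.
- by apply: measurable_funM; [exact: measurable_cst|exact: mp].
rewrite (@iZ _ _ _ mu _ (fun x => maxr (- L x) 0)%R) ?icst in I; last 3 first.
- exact: ltW.
- by move=> x; rewrite m0.
- exact: mp.
rewrite (@iD _ _ _ mu (fun x => maxr (u x) 0 + beta * maxr (L x) 0 + w x)%R (fun=> maxr (- c)%R 0%R)) in I; last 4 first.
- by move=> x; rewrite !addr_ge0 ?mulr_ge0 ?m0 ?ltW.
- by move=> x; rewrite m0.
- apply: measurable_funD => //.
  apply: measurable_funD; first exact: mm.
  by apply: measurable_funM; [exact: measurable_cst|exact: mm].
- exact: measurable_cst.
rewrite (@iD _ _ _ mu (fun x => maxr (u x) 0 + beta * maxr (L x) 0)%R w) in I; last 4 first.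
- by move=> x; rewrite !addr_ge0 ?mulr_ge0 ?m0 ?ltW.
- by [].
- apply: measurable_funD; first exact: mm.
  by apply: measurable_funM; [exact: measurable_cst|exact: mm].
- exact: mw.
rewrite (@iD _ _ _ mu (fun x => maxr (u x) 0)%R (fun x => beta * maxr (L x) 0)%R) in I; last 4 first.
- by move=> x; rewrite m0.
- by move=> x; rewrite mulr_ge0 ?m0 ?ltW.
- exact: mm.
- by apply: measurable_funM; [exact: measurable_cst|exact: mm].
rewrite (@iZ _ _ _ mu _ (fun x => maxr (L x) 0)%R) ?icst in I; last 3 first.
- exact: ltW.
- by move=> x; rewrite m0.
- exact: mm.
rewrite (@iPN _ _ _ mu L) (@iPN _ _ _ mu (fun x => ln (a x))).
rewrite pn nn in HL.
apply: (@final_arith R _ _ _ _ (\int[mu]_x (w x)%:E) beta (maxr c 0%R) (maxr (- c)%R 0%R)) => //.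
- exact: ige0.
- exact: ige0.
- exact: ige0.
- exact: ige0.
- exact: ige0.
- exact: posneg.
Qed.
End gibbs.


Section gibbs2.
Context d (T : measurableType d) (R : realType).
Local Open Scope ereal_scope.

Lemma gibbs (m mu : probability T R) (L : T -> R) (beta W : R) :
  (0 < beta)%R -> (0 < W)%R -> measurable_fun setT L ->
  \int[m]_x (expR (- (beta * L x)) / W)%:E <= 1 ->
  integral_well_defined mu L ->
  (- ln W / beta)%:E <= dual_adde (\int[mu]_x (L x)%:E) (rel_entropy mu m * (beta^-1)%:E).
Proof.
move=> b0 W0 mL Hq [_ HL].
rewrite /rel_entropy; case: pselect => [dom|ndom]; last first.
  rewrite mulyr gtr0_sg ?invr_gt0 // mul1e.
  by case: (\int[mu]_x _) => [r| |] /=; rewrite ?leey.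
have dom' : mu `<< m := dom.
pose f0 := Radon_Nikodym_SigmaFinite.f mu m.
have f0ge0 := Radon_Nikodym_SigmaFinite.f_ge0 dom'.
have f0fin := Radon_Nikodym_SigmaFinite.f_fin_num dom'.
have mf0 : measurable_fun setT f0.
  exact: measurable_int (Radon_Nikodym_SigmaFinite.f_integrable dom').
have f0int := Radon_Nikodym_SigmaFinite.f_integral dom'.
pose a x := fine (f0 x).
have a0 x : (0 <= a x)%R by rewrite /a fine_ge0.
have ma : measurable_fun setT a.
  exact: measurableT_comp (fine_measurable measurableT) mf0.
have Hmu A : measurable A -> mu A = \int[m]_(x in A) (a x)%:E.
  by move=> mA; rewrite f0int //; apply: eq_integral => x _; rewrite /a fineK.
have ae : ae_eq m setT f0 (Radon_Nikodym (charge_of_finite_measure mu) m).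
  exact: ae_eq_Radon_Nikodym_SigmaFinite.
have aemu : ae_eq mu setT f0 (Radon_Nikodym (charge_of_finite_measure mu) m).
  move: ae => [N [mN N0 sub]]; exists N; split => //.
  have : m.-null_set N by apply/measure0_null_setP.
  by move/dom' => /measure0_null_setP ->.
have -> : \int[mu]_x (ln (fine (Radon_Nikodym (charge_of_finite_measure mu) m x)))%:E
    = \int[mu]_x (ln (a x))%:E.
  apply: ae_eq_integral => //.
  - apply/measurable_EFinP; apply: measurableT_comp; first exact: measurable_ln.
    apply: measurableT_comp (fine_measurable measurableT) _.
    exact: measurable_int (Radon_Nikodym_integrable dom).
  - apply/measurable_EFinP; apply: measurableT_comp; first exact: measurable_ln.
    exact: measurableT_comp.
  - by apply: filterS aemu => x h Tx; rewrite /a h.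
rewrite /=; exact: (@gibbs_core _ _ _ m mu a L beta W b0 W0 a0 ma Hmu mL Hq HL).
Qed.
End gibbs2.

End Helpers.
Import Helpers.
Import Num.Def.

Theorem mainTheorem11 (R : realType) (disp : measure_display)
  (M : measurableType disp) (dist : M -> M -> R)
  (m : probability M R) (beta : R)
  (loss : nat -> M -> R) (mt : nat -> probability M R) (xs : nat -> M) :
  is_metric dist -> metric_complete dist -> metric_separable dist ->
  geodesic_space dist -> borel_of_dist dist ->
  in_P2 dist m -> A1 dist -> A2 dist ->
  0 < beta ->
  (forall t, (1 <= t)%N -> measurable_fun setT (loss t)) ->
  (forall t, (1 <= t)%N -> geod_expconcave dist beta (loss t)) ->
  (* EWB forecaster, well defined *)
  (forall A, measurable A -> mt 1%N A = m A) ->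
  (forall t, (1 <= t)%N ->
     let Z := (\int[mt t]_x (expR (- (beta * loss t x)))%:E)%E in
     (0 < Z < +oo)%E /\
     forall A, measurable A ->
       mt t.+1 A =
       (\int[mt t]_(x in A) (expR (- (beta * loss t x)))%:E * ((fine Z)^-1)%:E)%E) ->
  (forall t, (1 <= t)%N -> in_P2 dist (mt t)) ->
  (forall t, (1 <= t)%N -> barycenter dist (mt t) (xs t)) ->
  forall n, (1 <= n)%N ->
    let L := fun x => \sum_(1 <= t < n.+1) loss t x in
    ((\sum_(1 <= t < n.+1) loss t (xs t))%:E <=
     ereal_inf [set v | exists mu : probability M R,
        integral_well_defined mu L /\
        v = dual_adde (\int[mu]_x (L x)%:E)
                      (rel_entropy mu m * (beta^-1)%:E)])%E.

Proof.
move=> _ _ _ _ _ _ _ HA2 b0 mloss Hexp Hm1 Hdef HP2 Hbar n hn; cbv zeta.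
pose g t x := expR (- (beta * loss t x)).
pose z t := fine (\int[mt t]_x (g t x)%:E)%E.
have zpos t : (1 <= t)%N -> (0 < z t)%R.
  by move=> ht; case: (Hdef t ht) => h _; exact: fine_gt0 h.
have zfin t : (1 <= t)%N -> (\int[mt t]_x (g t x)%:E = (z t)%:E)%E.
  move=> ht; case: (Hdef t ht) => /andP[h1 h2] _.
  by rewrite /z fineK // fin_numElt h2 (lt_trans _ h1) ?ltNy0.
have mg t : (1 <= t)%N -> measurable_fun setT (g t).
  move=> ht; apply: measurableT_comp; first exact: measurable_expR.
  by apply: measurable_funN; apply: measurable_funM => //; exact: mloss.
have dens t (ht : (1 <= t)%N) (f : M -> \bar R) : (forall x, 0 <= f x)%E ->
    measurable_fun setT f ->
    (\int[mt t.+1]_x f x = \int[mt t]_x (f x * (g t x / z t)%:E))%E.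
  move=> f0 mf; apply: esym.
  apply: (@dens_change _ _ _ (mt t.+1) (mt t) (fun x => g t x / z t) _ _ _ f setT) => //.
  - by move=> x; rewrite divr_ge0 ?expR_ge0 ?ltW ?zpos.
  - by apply: measurable_funM => //; exact: mg.
  - move=> A mA; have [_ HH] := Hdef t ht; apply: (etrans (HH A mA)).
    rewrite [RHS](eq_integral (fun x => ((z t)^-1)%:E * (g t x)%:E)%E); last first.
      by move=> x _; rewrite -EFinM mulrC.
    rewrite ge0_integralZl //; first by rewrite muleC.
    - by apply/measurable_funTS/measurable_EFinP; exact: mg.
    - by move=> x _; rewrite lee_fin expR_ge0.
    - by rewrite lee_fin invr_ge0 ltW ?zpos.
pose Lk t x := \sum_(1 <= s < t) loss s x.
pose P t := \prod_(1 <= s < t) z s.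
have Ppos k : 0 < P k.+1.
  elim: k => [|k IH]; first by rewrite /P big_geq.
  by rewrite /P big_nat_recr //= mulr_gt0 // zpos.
have mLk k : measurable_fun setT (Lk k.+1).
  elim: k => [|k IH].
    rewrite (_ : Lk 1%N = cst 0); first exact: measurable_cst.
    by apply/funext => x; rewrite /Lk big_geq.
  rewrite (_ : Lk k.+2 = fun x => Lk k.+1 x + loss k.+1 x).
    by apply: measurable_funD => //; exact: mloss.
  by apply/funext => x; rewrite /Lk big_nat_recr.
have tele k (f : M -> \bar R) : (forall x, 0 <= f x)%E -> measurable_fun setT f ->
    (\int[mt k.+1]_x f x =
     \int[m]_x (f x * (expR (- (beta * Lk k.+1 x)) / P k.+1)%:E))%E.
  elim: k f => [|k IH] f f0 mf.
    under [RHS]eq_integral => x _.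
      rewrite /Lk /P !big_geq // mulr0 oppr0 expR0 divr1 mule1.
      over.
    by apply: eq_measure_integral => A mA _; exact: Hm1.
  rewrite dens //.
  rewrite IH; last 2 first.
  - by move=> x; rewrite mule_ge0 // lee_fin divr_ge0 ?expR_ge0 ?ltW ?zpos.
  - apply: emeasurable_funM => //; apply/measurable_EFinP.
    by apply: measurable_funM => //; exact: mg.
  apply: eq_integral => x _; rewrite -muleA -EFinM; congr (_ * _%:E)%E.
  rewrite /Lk /P (big_nat_recr k.+1) //= (big_nat_recr k.+1) //= /g.
  rewrite mulrDr opprD expRD.
  have := zpos k.+1 isT; have := Ppos k; rewrite /P => h1 h2.
  by field; rewrite !gt_eqF.
have stepA t : (1 <= t)%N -> loss t (xs t) <= - ln (z t) / beta.
  move=> ht.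
  have cv : geod_convex dist (fun x => - g t x) := Hexp t ht.
  have intg : (mt t).-integrable setT (EFin \o (fun x => - g t x)).
    apply/integrableP; split.
      by apply/measurable_EFinP; apply: measurable_funN; exact: mg.
    rewrite (eq_integral (fun x => (g t x)%:E)); last first.
      by move=> x _; rewrite /comp abse_EFin normrN ger0_norm ?expR_ge0.
    by rewrite zfin // ltry.
  have := HA2 (mt t) (xs t) (fun x => - g t x) (HP2 t ht) (Hbar t ht) cv (or_intror intg).
  rewrite (eq_integral (fun x => - (g t x)%:E)%E); last by move=> x _; rewrite EFinN.
  rewrite integral_ge0N; last by move=> x _; rewrite lee_fin expR_ge0.
  rewrite zfin // -EFinN lee_fin lerN2 => h.
  have h2 : ln (z t) <= ln (g t (xs t)).
    by rewrite ler_ln ?posrE ?expR_gt0 ?zpos.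
  move: h2; rewrite /g expRK => h2.
  by rewrite ler_pdivlMr // mulrC; lra.
have lnP k : ln (P k.+1) = \sum_(1 <= s < k.+1) ln (z s).
  elim: k => [|k IH]; first by rewrite /P !big_geq // ln1.
  rewrite /P (big_nat_recr k.+1) // (big_nat_recr k.+1) //= lnM ?posrE ?zpos //; last exact: Ppos.
  by rewrite -IH.
have S1 : \sum_(1 <= t < n.+1) loss t (xs t) <= - ln (P n.+1) / beta.
  apply: le_trans (ler_sum_nat (G := fun t => - ln (z t) / beta) _) _.
    by move=> i /andP[hi _]; exact: stepA.
  by rewrite lnP -sumrN mulr_suml.
apply/ereal_infP => y [mu [wd ->]].
apply: (@le_trans _ _ (- ln (P n.+1) / beta)%:E); first by rewrite lee_fin.
apply: (@gibbs _ _ _ m mu (Lk n.+1) beta (P n.+1) b0 (Ppos n) (mLk n)) => //.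
have h := tele n (fun _ => (1%R)%:E) (fun _ => lee01) (measurable_cst _).
rewrite icst in h.
rewrite (eq_integral (fun x => (1%R)%:E * (expR (- (beta * Lk n.+1 x)) / P n.+1)%:E)%E).
  by rewrite -h.
by move=> x _; rewrite mul1e.
Qed.
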